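(* Let $\phi:\mathbb{N}^+\to\mathbb{R}$ be nondecreasing with $\phi(i)>1$ for all $i$, let $m,k\in\mathbb{N}^+$, and let $A>0$ satisfy $A-\ln A-\ln 2-1>0$. Define $$F^0_{mk}:=\bigcup J_{(a_1,\dots,a_{m+k})},$$ the union over all $(a_1,\dots,a_{m+k})\in(\mathbb{N}^+)^{m+k}$ with $a_{m+i}<\phi(m+i)$ for $i=1,\dots,k$ (no constraint on $a_1,\dots,a_m$), and $$G^0_k:=\bigcup J_{(a_1,\dots,a_k)},$$ the union over all $(a_1,\dots,a_k)\in(\mathbb{N}^+)^k$ with $a_1a_2\cdots a_k\ge e^{Ak}$. Then $|\overline{F^0_{mk}}|=|F^0_{mk}|$ and $|\overline{G^0_k}|=|G^0_k|$, where $\overline{S}$ denotes closure and $|S|$ Lebesgue measure.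
   Context: For a tuple $(a_1,\dots,a_i)$ of positive integers, define $p_{-1}=1$, $p_0=0$, $q_{-1}=0$, $q_0=1$, and $p_j=a_jp_{j-1}+p_{j-2}$, $q_j=a_jq_{j-1}+q_{j-2}$ for $j=1,\dots,i$. Then $J_{(a_1,\dots,a_i)}$ is the open interval with endpoints $p_i/q_i$ and $(p_i+p_{i-1})/(q_i+q_{i-1})$; equivalently, it is the set of numbers $[0;a_1,\dots,a_i,r]=\frac{r p_i+p_{i-1}}{r q_i+q_{i-1}}$ for $r\in(1,\infty)$, i.e. the numbers in $(0,1)$ whose continued fraction begins $[0;a_1,\dots,a_i,\dots]$ followed by further elements. *)

(* Defs.v *)
From HB Require Import structures.
From mathcomp Require Import all_boot all_order all_algebra.
From mathcomp Require Import all_classical all_reals all_analysis.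
Set Implicit Arguments. Unset Strict Implicit. Unset Printing Implicit Defensive.
Import Order.TTheory GRing.Theory Num.Theory.
Local Open Scope classical_set_scope.
Local Open Scope ring_scope.

(* Continuant recursion: for a = (a_1,...,a_i), returns
   (p_i, p_{i-1}, q_i, q_{i-1}) starting from p_0=0,p_{-1}=1,q_0=1,q_{-1}=0. *)
Definition cf_pq (a : seq nat) : nat * nat * nat * nat :=
  foldl (fun (s : nat * nat * nat * nat) (aj : nat) =>
           let: (p, p', q, q') := s in
           (aj * p + p', p, aj * q + q', q)%N) (0, 1, 1, 0)%N a.

Definition Jcyl (R : realType) (a : seq nat) : set R :=
  let: (p, p', q, q') := cf_pq a in
  let e1 : R := p%:R / q%:R in
  let e2 : R := (p + p')%:R / (q + q')%:R in
  [set x : R | Num.min e1 e2 < x < Num.max e1 e2].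

(* F^0_{mk}: union over (a_1..a_{m+k}) in (N^+)^{m+k} with
   a_{m+i} < phi(m+i) for i = 1..k.  Sequences are 0-indexed: a_j = nth 0 a (j-1). *)
Definition F0 (R : realType) (phi : nat -> R) (m k : nat) : set R :=
  \bigcup_(a in [set a : seq nat | size a = (m + k)%N /\ all (fun x => 0 < x)%N a /\
        (forall i : nat, (1 <= i <= k)%N -> (nth 0%N a (m + i - 1))%:R < phi (m + i)%N)])
    @Jcyl R a.

Definition G0 (R : realType) (A : R) (k : nat) : set R :=
  \bigcup_(a in [set a : seq nat | size a = k /\ all (fun x => 0 < x)%N a /\
        expR (A * k%:R) <= (\prod_(x <- a) x)%N%:R])
    @Jcyl R a.

(* Main.v *)
Require Import Defs.
From HB Require Import structures.
From mathcomp Require Import all_boot all_order all_algebra.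
From mathcomp Require Import all_classical all_reals all_analysis.
Import Order.TTheory GRing.Theory Num.Theory.
Import numFieldNormedType.Exports.
Local Open Scope classical_set_scope.
Local Open Scope ring_scope.
From mathcomp Require Import ring lra measurable_realfun.
Set Implicit Arguments. Unset Strict Implicit.

Section Alg.
Variable R : realType.

Lemma lt_prod (e1 e2 x : R) : e1 <= e2 ->
  (e1 < x < e2) = ((e1 - x) * (e2 - x) < 0).
Proof.
move=> h; apply/idP/idP.
+ case/andP=> h1 h2; rewrite nmulr_rlt0 ?subr_lt0 // subr_gt0 //.
+ move=> H; apply/andP; split.
  * rewrite -subr_lt0; apply: contraTT H; rewrite -leNgt => H1.
    rewrite -leNgt mulr_ge0 //; lra.
  * rewrite -subr_gt0; apply: contraTT H; rewrite -leNgt => H1.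
    rewrite -leNgt mulr_le0 //; lra.
Qed.

Lemma between_prod (e1 e2 x : R) :
  (Num.min e1 e2 < x < Num.max e1 e2) = ((e1 - x) * (e2 - x) < 0).
Proof.
rewrite /Num.min /Num.max; case: (ltP e1 e2) => h.
- by rewrite lt_prod // ltW.
- by rewrite lt_prod // mulrC.
Qed.
End Alg.

Lemma cf_rcons a c : cf_pq (rcons a c) =
  let: (p, p', q, q') := cf_pq a in (c * p + p', p, c * q + q', q)%N.
Proof. by rewrite /cf_pq foldl_rcons; case: foldl => [[[]]]. Qed.

Lemma cf_q_pos a : all (fun x => 0 < x)%N a -> (0 < (cf_pq a).1.2)%N.
Proof.
elim/last_ind: a => [//|a c IH].
rewrite all_rcons => /andP[c0 /IH]; rewrite cf_rcons.
case: (cf_pq a) => [[[p p'] q] q'] /= q0.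
by rewrite (leq_trans q0) // (leq_trans _ (leq_addr _ _)) // leq_pmull.
Qed.

Section Mem.
Variable R : realType.

Lemma memJ a (x : R) p p' q q' : cf_pq a = (p, p', q, q') -> (0 < q)%N ->
  (@Jcyl R a x <-> (x * q%:R - p%:R) * ((x * q%:R - p%:R) + (x * q'%:R - p'%:R)) < 0).
Proof.
move=> E q0; rewrite /Jcyl E /= between_prod.
have qR : (0 : R) < q%:R by rewrite ltr0n.
have qqR : (0 : R) < (q + q')%:R by rewrite ltr0n addn_gt0 q0.
have -> : (p%:R / q%:R - x) * ((p + p')%:R / (q + q')%:R - x) =
   ((x * q%:R - p%:R) * ((x * q%:R - p%:R) + (x * q'%:R - p'%:R))) / (q%:R * (q + q')%:R) :> R.
  rewrite !natrD; field.
  by rewrite -natrD !pnatr_eq0 -!lt0n addn_gt0 q0.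
by rewrite pmulr_llt0 // invr_gt0 mulr_gt0.
Qed.
End Mem.

Section Lin.
Variable R : realType.
Implicit Types s b c : R.

Lemma sq_pos s : s != 0 -> 0 < s ^+ 2.
Proof. by move=> s0; rewrite exprn_even_gt0. Qed.

Lemma key_lin s b c : s != 0 ->
  ((c * s + b) * ((c * s + b) + s) < 0) = (c < - b / s < c + 1).
Proof.
move=> s0; rewrite lt_prod; last lra.
have -> : (c * s + b) * ((c * s + b) + s) = s ^+ 2 * ((c - - b / s) * (c + 1 - - b / s)).
  by field.
by rewrite pmulr_rlt0 // sq_pos.
Qed.

Lemma s_nz s b c : (c * s + b) * ((c * s + b) + s) < 0 -> s != 0.
Proof.
apply: contraTneq => ->; rewrite addr0 -leNgt -expr2; exact: sqr_ge0.
Qed.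

Lemma base_lin s b : s != 0 -> (s * (s + b) < 0) = (1 < - b / s).
Proof.
move=> s0.
have -> : s * (s + b) = s ^+ 2 * (1 - - b / s) by field.
by rewrite pmulr_rlt0 ?sq_pos // subr_lt0.
Qed.

Lemma L_sub s b (c : nat) : (1 <= c)%N ->
  (c%:R * s + b) * ((c%:R * s + b) + s) < 0 -> s * (s + b) < 0.
Proof.
move=> c1 H; have s0 := s_nz H; move: H; rewrite key_lin // base_lin //.
have : (1 : R) <= c%:R by rewrite ler1n.
move=> ? /andP[? ?]; lra.
Qed.

Lemma L_eq s b (c d : nat) :
  (c%:R * s + b) * ((c%:R * s + b) + s) < 0 ->
  (d%:R * s + b) * ((d%:R * s + b) + s) < 0 -> c = d.
Proof.
move=> H; have s0 := s_nz H; move: H; rewrite !key_lin //.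
case/andP=> h1 h2 /andP[h3 h4].
have : (c%:R : R) < d%:R + 1 by lra.
have : (d%:R : R) < c%:R + 1 by lra.
rewrite !natr1 !ltr_nat !ltnS => ? ?; apply/eqP; rewrite eqn_leq; apply/andP; split => //.
Qed.

Lemma L_ex s b : s * (s + b) < 0 -> (forall c : nat, (1 <= c)%N -> c%:R * s + b != 0) ->
  exists2 c : nat, (1 <= c)%N & (c%:R * s + b) * ((c%:R * s + b) + s) < 0.
Proof.
move=> H nz.
have s0 : s != 0 by apply: contraTneq H => ->; rewrite mul0r ltxx.
move: H; rewrite base_lin // => t1.
set t := - b / s in t1 *.
have t0 : 0 <= t by lra.
have [h1 h2] := andP (truncn_itv t0).
exists (Num.truncn t).
  by rewrite truncn_gt0 ltW.
rewrite key_lin //; apply/andP; split; last by rewrite natr1.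
rewrite lt_neqAle h1 andbT; apply/eqP => E.
have c1 : (1 <= Num.truncn t)%N by rewrite truncn_gt0 ltW.
move: (nz (Num.truncn t) c1); rewrite E /t; apply/negP; rewrite negbK.
apply/eqP; field; exact s0.
Qed.
End Lin.

Section Cyl.
Variable R : realType.
Definition pos_all (a : seq nat) := all (fun x => 0 < x)%N a.
Definition Eset : set R := [set x | exists p q : nat, x = p%:R / q%:R].

Lemma memJr a c (x : R) p p' q q' : pos_all a -> (1 <= c)%N ->
  cf_pq a = (p, p', q, q') ->
  (@Jcyl R (rcons a c) x <->
   (c%:R * (x * q%:R - p%:R) + (x * q'%:R - p'%:R)) *
   ((c%:R * (x * q%:R - p%:R) + (x * q'%:R - p'%:R)) + (x * q%:R - p%:R)) < 0).
Proof.
move=> pa c1 E.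
have q0 : (0 < q)%N by move: (cf_q_pos pa); rewrite E.
have E' : cf_pq (rcons a c) = (c * p + p', p, c * q + q', q)%N by rewrite cf_rcons E.
rewrite (memJ x E'); last by rewrite (leq_trans q0) // (leq_trans _ (leq_addr _ _)) // leq_pmull.
have -> : x * (c * q + q')%:R - (c * p + p')%:R =
  c%:R * (x * q%:R - p%:R) + (x * q'%:R - p'%:R) :> R by rewrite !natrD !natrM; ring.
by [].
Qed.

Lemma Jsub a c (x : R) : pos_all a -> (1 <= c)%N -> @Jcyl R (rcons a c) x -> @Jcyl R a x.
Proof.
move=> pa c1.
case E : (cf_pq a) => [[[p p'] q] q'].
have q0 : (0 < q)%N by move: (cf_q_pos pa); rewrite E.
rewrite (memJr x pa c1 E) (memJ x E q0); exact: L_sub.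
Qed.

Lemma Jdisj a b (y : R) : size a = size b -> pos_all a -> pos_all b ->
  @Jcyl R a y -> @Jcyl R b y -> a = b.
Proof.
elim/last_ind: a b => [|a c IH] b.
  by case: b.
case/lastP: b => [|b d]; first by rewrite size_rcons.
rewrite !size_rcons => -[sz]; rewrite /pos_all !all_rcons => /andP[c1 pa] /andP[d1 pb] ya yb.
have ab : a = b by apply: IH => //; [exact: Jsub ya | exact: Jsub yb].
subst b.
case E : (cf_pq a) => [[[p p'] q] q'].
move: ya yb; rewrite (memJr y pa c1 E) (memJr y pa d1 E) => ya yb.
by rewrite (L_eq ya yb).
Qed.

Lemma Jex (x : R) : ~ Eset x -> 0 < x < 1 -> forall n,
  exists a, [/\ size a = n, pos_all a & @Jcyl R a x].
Proof.
move=> nE x01; elim=> [|n [a [sz pa ja]]].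
  exists [::]; split => //.
  rewrite (memJ x (p:=0) (p':=1) (q:=1) (q':=0)) //.
  case/andP: x01 => h1 h2.
  rewrite !mulr1 !mulr0 !subr0 sub0r pmulr_rlt0 //; lra.
case E : (cf_pq a) => [[[p p'] q] q'].
have q0 : (0 < q)%N by move: (cf_q_pos pa); rewrite E.
move: ja; rewrite (memJ x E q0) => ja.
have nz : forall c : nat, (1 <= c)%N ->
    c%:R * (x * q%:R - p%:R) + (x * q'%:R - p'%:R) != 0.
  move=> c c1; apply/eqP => Hc; apply: nE.
  exists (c * p + p')%N, (c * q + q')%N.
  have qq : ((c * q + q')%:R : R) != 0.
    by rewrite pnatr_eq0 -lt0n (leq_trans q0) // (leq_trans _ (leq_addr _ _)) // leq_pmull.
  have HN : ((c * p + p')%:R : R) = x * (c * q + q')%:R.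
    apply/eqP; rewrite -subr_eq0.
    have -> : ((c * p + p')%:R : R) - x * (c * q + q')%:R =
       - (c%:R * (x * q%:R - p%:R) + (x * q'%:R - p'%:R)) by rewrite !natrD !natrM; ring.
    by rewrite Hc oppr0.
  by rewrite HN mulfK.
have [c c1 Hc] := L_ex ja nz.
exists (rcons a c); split; first by rewrite size_rcons sz.
  by rewrite /pos_all all_rcons c1.
by rewrite (memJr x pa c1 E).
Qed.
End Cyl.

Section Top.
Variable R : realType.

Lemma J0 (x : R) : @Jcyl R [::] x <-> 0 < x < 1.
Proof.
rewrite (memJ x (p:=0) (p':=1) (q:=1) (q':=0)) //.
rewrite !mulr1 !mulr0 !subr0 sub0r.
split => [H|/andP[h1 h2]]; last by rewrite pmulr_rlt0 //; lra.
have x0 : x != 0 by apply: contraTneq H => ->; rewrite mul0r ltxx.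
case: (ltgtP x 0) => [xl|xg|/eqP]; last by rewrite (negbTE x0).
  have : 0 < x * (x + -1) by rewrite nmulr_rgt0 //; lra.
  by rewrite ltNge (ltW H).
by move: H; rewrite pmulr_rlt0 // => ?; apply/andP; split => //; lra.
Qed.

Lemma J01 a (x : R) : pos_all a -> @Jcyl R a x -> 0 < x < 1.
Proof.
elim/last_ind: a => [_|a c IH]; first by move/J0.
rewrite /pos_all all_rcons => /andP[c1 pa] H; apply: IH => //; exact: Jsub H.
Qed.

Lemma Jopen a : open (@Jcyl R a).
Proof.
rewrite /Jcyl; case: cf_pq => [[[p p'] q] q'].
have -> : [set x : R | Num.min (p%:R / q%:R) ((p + p')%:R / (q + q')%:R) < x <
   Num.max (p%:R / q%:R) ((p + p')%:R / (q + q')%:R)] =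
   [set x | Num.min (p%:R / q%:R) ((p + p')%:R / (q + q')%:R) < x] `&`
   [set x | x < Num.max (p%:R / q%:R) ((p + p')%:R / (q + q')%:R)].
  by rewrite predeqE => r; split => [/andP[? ?] //|[/= -> ->]].
by apply: openI; [exact: open_gt | exact: open_lt].
Qed.

Lemma closure_sub (I : set (seq nat)) n :
  (forall a, I a -> size a = n /\ pos_all a) ->
  closure (\bigcup_(a in I) @Jcyl R a) `<=` (\bigcup_(a in I) @Jcyl R a) `|` @Eset R.
Proof.
move=> HI x cx.
case: (pselect (@Eset R x)) => [? | nE]; [by right | left].
have S01 : forall y, (\bigcup_(a in I) @Jcyl R a) y -> 0 < y < 1.
  by move=> y [a /HI [_ pa] ya]; exact: J01 ya.
have x01 : 0 < x < 1.
  apply/andP; split.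
    case: (ltgtP x 0) => // [xl|x0].
      have [y [/S01 /andP[y0 _] /= yl]] := cx _ (open_nbhs_nbhs (conj (@open_lt R 0) xl)).
      by move: yl; rewrite ltNge (ltW y0).
    by exfalso; apply: nE; exists 0%N, 1%N; rewrite x0 mul0r.
  case: (ltgtP x 1) => // [xg|x1].
    have [y [/S01 /andP[_ y1] /= yl]] := cx _ (open_nbhs_nbhs (conj (@open_gt R 1) xg)).
    by move: yl; rewrite ltNge (ltW y1).
  by exfalso; apply: nE; exists 1%N, 1%N; rewrite x1 divr1.
have [a [sz pa xa]] := Jex nE x01 n.
have [y [[b Ib yb] ya]] := cx _ (open_nbhs_nbhs (conj (@Jopen a) xa)).
have [szb pb] := HI b Ib.
have ab : a = b by apply: (Jdisj (y := y)) => //; rewrite sz szb.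
by exists b => //; rewrite -ab.
Qed.

Lemma Eset_count : countable (@Eset R).
Proof.
apply: (card_le_trans _ (countableP [set: nat * nat])).
have -> : @Eset R = (fun pq : nat * nat => pq.1%:R / pq.2%:R) @` setT.
  rewrite predeqE => x; split => [[p [q ->]]|[[p q] _ <-]]; last by exists p, q.
  by exists (p, q).
exact: card_image_le.
Qed.

Lemma meas_closure (I : set (seq nat)) n :
  (forall a, I a -> size a = n /\ pos_all a) ->
  (@lebesgue_measure R) (closure (\bigcup_(a in I) @Jcyl R a)) =
  (@lebesgue_measure R) (\bigcup_(a in I) @Jcyl R a).
Proof.
move=> HI.
set S := \bigcup_(a in I) @Jcyl R a.
have mS : measurable S by apply: open_measurable; apply: bigcup_open => a _; exact: Jopen.
have mC : measurable (closure S) by apply: closed_measurable; exact: closed_closure.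
have mE : measurable (@Eset R).
  by apply: countable_measurable; [exact: measurable_set1 | exact: Eset_count].
apply/eqP; rewrite eq_le; apply/andP; split; last first.
  by apply: le_measure; rewrite ?inE //; exact: subset_closure.
have mSE : measurable (S `|` @Eset R) by exact: measurableU.
apply: (@le_trans _ _ ((@lebesgue_measure R) (S `|` @Eset R))).
  by apply: le_measure; rewrite ?inE //; exact: (closure_sub HI).
apply: (le_trans (measureU2 (@lebesgue_measure R) mS mE)).
set u := (X in (_ + X)%E).
have -> : u = 0%E by exact: (countable_lebesgue_measure0 Eset_count).
by rewrite adde0.
Qed.
End Top.

Theorem lemma4 (R : realType) (phi : nat -> R) (m k : nat) (A : R)
  (phi_mono : forall i j : nat, (0 < i)%N -> (i <= j)%N -> phi i <= phi j)
  (phi_gt1 : forall i : nat, (0 < i)%N -> 1 < phi i)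
  (m_pos : (0 < m)%N) (k_pos : (0 < k)%N)
  (A_pos : 0 < A) (hA : 0 < A - ln A - ln 2 - 1) :
  (@lebesgue_measure R) (@closure R (F0 phi m k)) = (@lebesgue_measure R) (F0 phi m k) /\
  (@lebesgue_measure R) (@closure R (G0 A k)) = (@lebesgue_measure R) (G0 A k).
Proof.
split.
  by apply: (@meas_closure R _ (m + k)%N) => a [? [? _]].
by apply: (@meas_closure R _ k) => a [? [? _]].
Qed.
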